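(* Let $G=(V,E)$ be a graph and let $\mathcal{M}$ be a nontrivial, unbounded graph matroid family with rank function $r$, dimensionality $d$, and threshold $t$. Suppose that $\mathcal{M}$ has the Lovász-Yemini property with constant $c$, i.e. every $c$-connected graph is $\mathcal{M}$-rigid. If $G$ is $(\max(t,c)+k)$-connected for some positive integer $k$, then $\mathcal{M}(G)$ is vertically $(k+1)$-connected.
   Context: All graphs are finite and simple and have no isolated vertices. A graph matroid family $\mathcal{M}$ assigns to every graph $G$ a matroid $\mathcal{M}(G)$ on $E(G)$ such that (i) every graph isomorphism $V(G)\to V(H)$ induces an isomorphism $\mathcal{M}(G)\to\mathcal{M}(H)$, and (ii) for every subgraph $H$ of $G$, $\mathcal{M}(H)$ is the restriction of $\mathcal{M}(G)$ to $E(H)$. $r(G)$ is the rank of $\mathcal{M}(G)$; $G$ is $\mathcal{M}$-rigid if $r(G)=r(K_{V(G)})$. $\mathcal{M}$ is nontrivial if some graph $G$ has $r(G)<|E(G)|$, unbounded if $r(K_n)$ is unbounded. An $\mathcal{M}$-circuit is a graph $C$ with $r(C)<|E(C)|$ and $r(C-e)=|E(C)|-1$ for all edges $e$. Dimensionality $d$: minimum over $\mathcal{M}$-circuits of (minimum degree $-1$); threshold $t$: minimum of $|V(C)|-1$ over $\mathcal{M}$-circuits $C$ of minimum degree $d+1$. For a matroid with rank function $r$ on ground set $E$ and positive integer $k$, a bipartition $(E_1,E_2)$ of $E$ is a vertical $k$-separation if $r(E_1),r(E_2)\ge k$ and $r(E_1)+r(E_2)\le r(E)+k-1$; the matroid is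 vertically $k$-connected if its rank is at least $k$ and it has no vertical $k'$-separation for any positive integer $k'<k$. *)

(* Defs.v *)
From mathcomp Require Import all_boot.
From mathcomp Require Import finmap.
Set Implicit Arguments. Unset Strict Implicit. Unset Printing Implicit Defensive.
Local Open Scope fset_scope.

(* An edge {u,v} is stored as the pair (u,v)
   with u < v.  A graph (finite, simple, no isolated vertices) is given by its
   finite edge set; its vertex set is the set of endpoints of its edges. *)
Definition edge := (nat * nat)%type.
Definition graph := {fset edge}.

Definition is_graph (G : graph) : Prop := forall e, e \in G -> e.1 < e.2.

Definition vertices (G : graph) : {fset nat} := \bigcup_(e <- G) [fset e.1; e.2].

Definition complete (V : {fset nat}) : graph := [fset p in V `*` V | p.1 < p.2].

Definition K (n : nat) : graph := complete [fset i | i in iota 0 n].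

Definition emap (f : nat -> nat) (e : edge) : edge :=
  (minn (f e.1) (f e.2), maxn (f e.1) (f e.2)).

Definition graph_iso (f : nat -> nat) (G H : graph) : Prop :=
  {in vertices G &, injective f} /\ [fset emap f e | e in G] = H.

Definition matroid_rank (E : {fset edge}) (r : {fset edge} -> nat) : Prop :=
  forall X Y, X `<=` E -> Y `<=` E ->
    [/\ r X <= #|` X|, (X `<=` Y -> r X <= r Y) &
        r (X `|` Y) + r (X `&` Y) <= r X + r Y].

(* A graph matroid family: rk G is the rank function of the matroid M(G)
   on E(G) (its values on subsets of E(G) are the only relevant ones). *)
Definition graph_matroid_family (rk : graph -> {fset edge} -> nat) : Prop :=
  [/\ (forall G, is_graph G -> matroid_rank G (rk G)),
      (forall G H f, is_graph G -> is_graph H -> graph_iso f G H ->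
         forall X, X `<=` G -> rk H [fset emap f e | e in X] = rk G X) &
      (forall G H, is_graph G -> H `<=` G ->
         forall X, X `<=` H -> rk H X = rk G X)].

Section Family.
Variable rk : graph -> {fset edge} -> nat.

Definition rnk (G : graph) : nat := rk G G.

Definition rigid (G : graph) : Prop := rnk G = rnk (complete (vertices G)).

Definition nontrivial : Prop := exists G, is_graph G /\ rnk G < #|` G|.

Definition unbounded : Prop := forall m, exists n, m < rnk (K n).

Definition circuit (C : graph) : Prop :=
  [/\ is_graph C, rnk C < #|` C| &
      forall e, e \in C -> rnk (C `\ e) = #|` C| - 1].

Definition deg (G : graph) (v : nat) : nat :=
  #|` [fset e in G | (e.1 == v) || (e.2 == v)]|.

Definition min_degree (G : graph) (m : nat) : Prop :=
  (exists2 v, v \in vertices G & deg G v = m) /\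
  (forall v, v \in vertices G -> m <= deg G v).

Definition dimensionality (d : nat) : Prop :=
  (exists C, circuit C /\ min_degree C d.+1) /\
  (forall C m, circuit C -> min_degree C m -> d.+1 <= m).

Definition threshold (d t : nat) : Prop :=
  (exists C, [/\ circuit C, min_degree C d.+1 & #|` vertices C| = t.+1]) /\
  (forall C, circuit C -> min_degree C d.+1 -> t.+1 <= #|` vertices C|).

Definition vertical_separation (G : graph) (k : nat) : Prop :=
  exists E1 E2 : {fset edge},
    [/\ E1 `|` E2 = G, E1 `&` E2 = fset0, k <= rk G E1, k <= rk G E2 &
        rk G E1 + rk G E2 <= rk G G + k - 1].

Definition vertically_connected (G : graph) (k : nat) : Prop :=
  k <= rk G G /\ forall k', 0 < k' -> k' < k -> ~ vertical_separation G k'.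
End Family.

Definition adj (G : graph) (u v : nat) : bool := ((u, v) \in G) || ((v, u) \in G).

Definition k_connected (G : graph) (k : nat) : Prop :=
  k < #|` vertices G| /\
  forall S : {fset nat}, S `<=` vertices G -> #|` S| < k ->
    forall u v, u \in vertices G `\` S -> v \in vertices G `\` S ->
      exists p : seq nat,
        path (fun x y => adj G x y && (y \notin S)) u p && (last u p == v).

Definition lovasz_yemini (rk : graph -> {fset edge} -> nat) (c : nat) : Prop :=
  forall G, is_graph G -> k_connected G c -> rigid rk G.

(* Main.v *)
Require Import Defs.
From mathcomp Require Import all_boot.
From mathcomp Require Import finmap.
From mathcomp Require Import zify.
Set Implicit Arguments. Unset Strict Implicit. Unset Printing Implicit Defensive.
Local Open Scope fset_scope.
Local Open Scope nat_scope.


Ltac normT := try change (Choice.sort Datatypes_nat__canonical__choice_Choice) with nat in *;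
  try change (Choice.sort (Datatypes_prod__canonical__choice_Choice Datatypes_nat__canonical__choice_Choice Datatypes_nat__canonical__choice_Choice)) with (nat * nat)%type in *;
  try change edge with (nat * nat)%type in *.
Ltac nlia := normT; lia.
Section Matroid.
Variables (E : {fset edge}) (r : {fset edge} -> nat).
Hypothesis hr : matroid_rank E r.

Lemma r_card X : X `<=` E -> r X <= #|` X|.
Proof. by move=> h; case: (hr h h). Qed.

Lemma r_mono X Y : Y `<=` E -> X `<=` Y -> r X <= r Y.
Proof. move=> hY hXY; have hX := fsubset_trans hXY hY. by case: (hr hX hY) => _ /(_ hXY). Qed.

Lemma r_sub X Y : X `<=` E -> Y `<=` E -> r (X `|` Y) + r (X `&` Y) <= r X + r Y.
Proof. by move=> hX hY; case: (hr hX hY). Qed.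

Lemma r0 : r fset0 = 0.
Proof. have := r_card (fsub0set E). rewrite cardfs0. lia. Qed.

Lemma r_addle X Y : X `<=` E -> Y `<=` E -> r (X `|` Y) <= r X + #|` Y|.
Proof. move=> hX hY; have := r_sub hX hY; have := r_card hY; lia. Qed.

Lemma r_dim X Y Z : Y `<=` E -> Z `<=` E -> X `<=` Y ->
  r (Y `|` Z) + r X <= r (X `|` Z) + r Y.
Proof.
move=> hY hZ hXY; have hX := fsubset_trans hXY hY.
have hXZ : X `|` Z `<=` E by rewrite fsubUset hX hZ.
have := r_sub hXZ hY.
have -> : X `|` Z `|` Y = Y `|` Z.
  apply/fsetP=> x; rewrite !inE; have := fsubsetP hXY x.
  by case: (x \in X); case: (x \in Y); case: (x \in Z) => //= /(_ isT).
have : r X <= r ((X `|` Z) `&` Y).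
  apply: r_mono; first by rewrite (fsubset_trans (fsubsetIr _ _) hY).
  by rewrite fsubsetI fsubsetUl hXY.
lia.
Qed.

Lemma r_closU A Y : A `<=` E -> Y `<=` E ->
  (forall y, y \in Y -> r (A `|` [fset y]) = r A) -> r (A `|` Y) = r A.
Proof.
move=> hA; elim/fset1U_rect: Y => [|y Y yY IH] hY hy; first by rewrite fsetU0.
have hY' : Y `<=` E by apply: fsubset_trans hY; apply: fsubsetU1.
have hyE : [fset y] `<=` E by rewrite fsub1set (fsubsetP hY) // fset1U1.
have e1 : r (A `|` Y) = r A.
  by apply: IH hY' _ => z hz; apply: hy; rewrite !inE hz orbT.
have e2 := hy y (fset1U1 _ _).
have hAY : A `|` Y `<=` E by rewrite fsubUset hA hY'.
have h1 := r_dim hAY hyE (fsubsetUl A Y).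
have -> : A `|` (y |` Y) = A `|` Y `|` [fset y].
  by apply/fsetP=> x; rewrite !inE; case: (x == y); case: (x \in A); case: (x \in Y).
have h2 : r A <= r (A `|` Y `|` [fset y]).
  apply: r_mono; first by rewrite fsubUset hAY hyE.
  by rewrite -fsetUA fsubsetUl.
lia.
Qed.

Lemma r_coloops A Z : A `<=` E -> Z `<=` E ->
  (forall z, z \in Z -> r (A `|` (Z `\ z)) < r (A `|` Z)) ->
  r (A `|` Z) = r A + #|` Z|.
Proof.
move=> hA; elim/finSet_rect: Z => Z IH hZ hc.
case: (fset_0Vmem Z) => [->|[z zZ]]; first by rewrite fsetU0 cardfs0 addn0.
have hZ' : Z `\ z `<=` E by apply: fsubset_trans hZ; apply: fsubsetDl.
have IH' := IH (Z `\ z) (fproperD1 zZ) hZ'.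
have eq1 : r (A `|` (Z `\ z)) = r A + #|` Z `\ z|.
  apply: IH' => w; rewrite in_fsetD1 => /andP [wz wZ].
  have hc1 := hc w wZ.
  have hc2 := hc z zZ.
  have hAZw : A `|` (Z `\ w) `<=` E by rewrite fsubUset hA (fsubset_trans (fsubsetDl _ _) hZ).
  have hAZz : A `|` (Z `\ z) `<=` E by rewrite fsubUset hA hZ'.
  have := r_sub hAZw hAZz.
  have -> : A `|` (Z `\ w) `|` (A `|` (Z `\ z)) = A `|` Z.
    apply/fsetP=> x; rewrite !inE.
    case: (eqVneq x w) => [->|xw] /=; first by rewrite wz wZ /=; case: (w \in A).
    case: (eqVneq x z) => [->|xz] /=; first by rewrite zZ; case: (z \in A).
    by case: (x \in A); case: (x \in Z).
  have -> : (A `|` (Z `\ w)) `&` (A `|` (Z `\ z)) = A `|` (Z `\ z `\ w).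
    apply/fsetP=> x; rewrite !inE.
    by case: (x == w); case: (x == z); case: (x \in A); case: (x \in Z).
  lia.
have := r_addle hA (fsubset_trans (fsubset_refl _) hZ).
have := hc z zZ.
have := cardfsD1 z Z; rewrite zZ.
lia.
Qed.

Lemma r_dep A Z : A `<=` E -> Z `<=` E -> r (A `|` Z) < r A + #|` Z| ->
  exists2 z, z \in Z & r (A `|` (Z `\ z)) = r (A `|` Z).
Proof.
move=> hA hZ hlt.
have [h|h] := boolP [exists z : Z, r (A `|` (Z `\ val z)) >= r (A `|` Z)].
  case/existsP: h => [[z zZ]] /= h; exists z => //.
  apply/eqP; rewrite eqn_leq h andbT; apply: r_mono.
    by rewrite fsubUset hA hZ.
  by apply: fsetUS; apply: fsubsetDl.
have := r_coloops hA hZ.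
suff: forall z, z \in Z -> r (A `|` (Z `\ z)) < r (A `|` Z) by move=> H /(_ H); lia.
move=> z zZ; move/existsPn: h => /(_ [` zZ]) /=; rewrite leqNgt; by case: ltngtP.
Qed.

End Matroid.


Lemma mem_complete V e : (e \in complete V) = [&& e.1 \in V, e.2 \in V & e.1 < e.2].
Proof. by rewrite /complete !inE andbA. Qed.

Lemma is_graph_complete V : is_graph (complete V).
Proof. by move=> e; rewrite mem_complete => /and3P []. Qed.

Lemma complete_sub W V : W `<=` V -> complete W `<=` complete V.
Proof.
move=> h; apply/fsubsetP=> e; rewrite !mem_complete => /and3P [h1 h2 ->].
by rewrite !(fsubsetP h).
Qed.

Lemma mem_vertices G x : reflect (exists2 e, e \in G & (x == e.1) || (x == e.2)) (x \in vertices G).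
Proof.
apply: (iffP (bigfcupP _ _ _ _)) => [[e /andP [eG _] hx]|[e eG hx]].
  by exists e => //; move: hx; rewrite !inE.
by exists e; rewrite ?eG // !inE.
Qed.

Lemma sub_complete_vertices G : is_graph G -> G `<=` complete (vertices G).
Proof.
move=> hG; apply/fsubsetP=> e eG; rewrite mem_complete hG // andbT.
by apply/andP; split; apply/mem_vertices; exists e; rewrite ?eqxx ?orbT.
Qed.

Definition ed (a b : nat) : edge := (minn a b, maxn a b).

Lemma ed_sym a b : ed a b = ed b a.
Proof. by rewrite /ed minnC maxnC. Qed.

Lemma ed_complete V a b : a \in V -> b \in V -> a != b -> ed a b \in complete V.
Proof.
move=> ha hb hab; rewrite mem_complete /ed.
case: (leqP a b) => h /=.
  by rewrite ha hb /= ltn_neqAle hab h.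
by rewrite ha hb h.
Qed.

Lemma vertices_complete V : (forall x, x \in V -> exists2 y, y \in V & y != x) ->
  vertices (complete V) = V.
Proof.
move=> h; apply/fsetP=> x; apply/idP/idP.
  case/mem_vertices=> e; rewrite mem_complete => /and3P [h1 h2 _].
  by case/orP=> /eqP ->.
move=> xV; have [y yV yx] := h x xV; apply/mem_vertices; exists (ed x y).
  by apply: ed_complete => //; rewrite eq_sym.
by rewrite /ed; case: (leqP x y) => hh /=; rewrite eqxx ?orbT.
Qed.

Definition oth (v : nat) (e : edge) : nat := if e.1 == v then e.2 else e.1.

Lemma ed_oth v e : e.1 < e.2 -> (e.1 == v) || (e.2 == v) -> e = ed v (oth v e).
Proof.
case: e => a b /= hab; rewrite /oth /=.
case: (eqVneq a v) => [<-|av] /= H.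
  by rewrite /ed; case: (leqP a b) => h //=; lia.
move/eqP: H => <-; rewrite /ed; case: (leqP b a) => h //=; lia.
Qed.

Lemma oth_ed v x : oth v (ed v x) = x.
Proof.
rewrite /oth /ed; case: (leqP v x) => h /=; first by rewrite eqxx.
by case: eqP => // ex; move: h; rewrite ex ltnn.
Qed.

Lemma ed_inj v : injective (ed v).
Proof. by move=> x y h; rewrite -(oth_ed v x) h oth_ed. Qed.

Lemma ed_touch v x : ((ed v x).1 == v) || ((ed v x).2 == v).
Proof. by rewrite /ed; case: (leqP v x) => h /=; rewrite eqxx ?orbT. Qed.

Lemma ed_ends v x y : ((y == (ed v x).1) || (y == (ed v x).2)) = (y == v) || (y == x).
Proof.
by rewrite /ed; case: (leqP v x) => h //=; rewrite orbC.
Qed.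
Definition sw (p q x : nat) : nat := if x == p then q else if x == q then p else x.

Lemma sw_inv p q x : sw p q (sw p q x) = x.
Proof.
rewrite /sw; case: (eqVneq x p) => [->|xp]; first by rewrite eqxx; case: eqP.
case: (eqVneq x q) => [->|xq]; first by rewrite eqxx.
by rewrite (negbTE xp) (negbTE xq).
Qed.

Lemma sw_inj p q : injective (sw p q).
Proof. exact: (can_inj (sw_inv p q)). Qed.

Lemma emap_ed f a b : emap f (ed a b) = ed (f a) (f b).
Proof. by rewrite /emap /ed; case: (leqP a b) => h //=; rewrite -/(ed _ _) ed_sym. Qed.

Lemma emap_edE f e : emap f e = ed (f e.1) (f e.2).
Proof. by []. Qed.

Lemma ed_e (e : edge) : e.1 < e.2 -> ed e.1 e.2 = e.
Proof. by case: e => a b /= h; rewrite /ed; case: (leqP a b) => //=; lia. Qed.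

Lemma mem_im_inv (f : nat -> nat) (W : {fset nat}) x : (forall y, f (f y) = y) ->
  (x \in [fset f y | y in W]) = (f x \in W).
Proof.
move=> hf; apply/imfsetP/idP => [[y yW ->]|h]; first by rewrite hf.
by exists (f x); rewrite ?hf.
Qed.

Lemma im_complete (f : nat -> nat) W : (forall y, f (f y) = y) ->
  [fset emap f e | e in complete W] = complete [fset f x | x in W].
Proof.
move=> hf; have finj : injective f := can_inj hf.
apply/fsetP=> e; apply/imfsetP/idP => [[e0 he0 ->]|he].
  have : e0 \in complete W := he0; rewrite mem_complete => /and3P [h1 h2 h3].
  rewrite /emap -/(ed _ _); apply: ed_complete; rewrite ?mem_im_inv ?hf //.
  by rewrite (inj_eq finj) neq_ltn h3.
move: he; rewrite mem_complete !mem_im_inv // => /and3P [h1 h2 h3].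
exists (ed (f e.1) (f e.2)).
  by apply: ed_complete => //; rewrite (inj_eq finj) neq_ltn h3.
by rewrite emap_ed !hf ed_e.
Qed.

Section Fam.
Variable rk : graph -> {fset edge} -> nat.
Hypothesis hfam : graph_matroid_family rk.

Lemma rk_mat G : is_graph G -> matroid_rank G (rk G).
Proof. by case: hfam => h _ _ hG; exact: (h G hG). Qed.

Lemma rk_res G H X : is_graph G -> H `<=` G -> X `<=` H -> rk H X = rk G X.
Proof. by move=> hG hH hX; case: hfam => _ _ h; exact: (h G H hG hH X hX). Qed.

Lemma rk_iso G H f X : is_graph G -> is_graph H -> graph_iso f G H -> X `<=` G ->
  rk H [fset emap f e | e in X] = rk G X.
Proof. by move=> hG hH hi hX; case: hfam => _ h _; exact: (h G H f hG hH hi X hX). Qed.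

Definition rho (W : {fset nat}) := rk (complete W) (complete W).

Lemma rk_sw V p q X : p \in V -> q \in V -> X `<=` complete V ->
  rk (complete V) [fset emap (sw p q) e | e in X] = rk (complete V) X.
Proof.
move=> pV qV hX; apply: rk_iso => //; try exact: is_graph_complete.
split; first by move=> x y _ _; apply: sw_inj.
rewrite im_complete; last exact: sw_inv.
congr complete; apply/fsetP=> x; rewrite mem_im_inv; last exact: sw_inv.
rewrite /sw; case: (eqVneq x p) => [->|xp]; first by rewrite qV pV.
by case: (eqVneq x q) => [->|xq] //; rewrite pV qV.
Qed.

Lemma rho_sw W p q : p \in W -> q \notin W ->
  rho [fset sw p q x | x in W] = rho W.
Proof.
move=> pW qW; rewrite /rho -im_complete; last exact: sw_inv.
apply: rk_iso; rewrite ?im_complete; try exact: sw_inv; try exact: is_graph_complete.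
  split; first by move=> x y _ _; apply: sw_inj.
  by rewrite im_complete //; exact: sw_inv.
exact: fsubset_refl.
Qed.

End Fam.

Lemma sw_fix p q x : x != p -> x != q -> sw p q x = x.
Proof. by rewrite /sw => /negbTE -> /negbTE ->. Qed.

Lemma sw_p p q : sw p q p = q.
Proof. by rewrite /sw eqxx. Qed.

Definition Tst (V : {fset nat}) v := [fset ed v x | x in V `\ v].

Lemma mem_Tst V v e : reflect (exists2 x, x \in V `\ v & e = ed v x) (e \in Tst V v).
Proof.
apply: (iffP idP) => [/imfsetP [x hx ->]|[x hx ->]]; first by exists x.
by apply/imfsetP; exists x.
Qed.

Lemma ed_in_Tst V v x : x \in V -> x != v -> ed v x \in Tst V v.
Proof. by move=> xV xv; apply/mem_Tst; exists x; rewrite // in_fsetD1 xv xV. Qed.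

Lemma Tst_sub V v : v \in V -> Tst V v `<=` complete V.
Proof.
move=> vV; apply/fsubsetP=> e /mem_Tst [x]; rewrite in_fsetD1 => /andP [xv xV] ->.
by apply: ed_complete; rewrite // eq_sym.
Qed.

Lemma A_sub V v : complete (V `\ v) `<=` complete V.
Proof. by apply: complete_sub; apply: fsubsetDl. Qed.

Lemma N_split V v : v \in V -> complete V = complete (V `\ v) `|` Tst V v.
Proof.
move=> vV; apply/eqP; rewrite eqEfsubset fsubUset A_sub Tst_sub // !andbT.
apply/fsubsetP=> e eN; rewrite in_fsetU.
have := eN; rewrite mem_complete => /and3P [h1 h2 h3].
case: (boolP ((e.1 == v) || (e.2 == v))) => h.
  rewrite (ed_oth h3 h) ed_in_Tst ?orbT //.
    by rewrite /oth; case: ifP.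
  rewrite /oth; case: ifP => [/eqP e1v|e1v]; last by move: h; rewrite e1v /=.
  by apply/negP => /eqP e2v; move: h3; rewrite e1v e2v ltnn.
by move: h; rewrite negb_or => /andP [n1 n2]; rewrite mem_complete !in_fsetD1 n1 n2 h1 h2 h3.
Qed.

Lemma Tst_notA V v e : e \in Tst V v -> e \notin complete (V `\ v).
Proof.
case/mem_Tst=> x _ ->; rewrite mem_complete !in_fsetD1.
have := ed_touch v x; case/orP => /eqP ->; by rewrite eqxx /= ?andbF.
Qed.

Section Unif.
Variable rk : graph -> {fset edge} -> nat.
Hypothesis hfam : graph_matroid_family rk.
Variable V : {fset nat}.
Local Notation N := (complete V).
Local Notation r := (rk (complete V)).

Lemma hrN : matroid_rank N r.
Proof. move=> X Y hX hY; have := @rk_mat rk hfam (complete V) (@is_graph_complete V) X Y hX hY. done. Qed.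

Lemma uniform v Z : v \in V -> Z `<=` Tst V v ->
  r (complete (V `\ v) `|` Z) = r (complete (V `\ v)) + #|` Z| \/
  r (complete (V `\ v) `|` Z) = r N.
Proof.
move=> vV hZ; set A := complete (V `\ v).
have hA : A `<=` N := A_sub V v.
have hT := Tst_sub vV.
have hZN : Z `<=` N := fsubset_trans hZ hT.
have hAZ : A `|` Z `<=` N by rewrite fsubUset hA hZN.
have hrN := hrN.
case: (ltnP (r (A `|` Z)) (r A + #|` Z|)) => hlt; last first.
  by left; apply/eqP; rewrite eqn_leq hlt (r_addle hrN hA hZN).
right.
have [z zZ ez] := r_dep hrN hA hZN hlt.
set B := A `|` (Z `\ z).
have hB : B `<=` N by rewrite fsubUset hA (fsubset_trans (fsubsetDl _ _) hZN).
have hBZ : B `|` [fset z] = A `|` Z.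
  apply/fsetP=> x; rewrite !inE; case: (eqVneq x z) => [->|xz] /=; first by rewrite zZ !orbT.
  by rewrite orbF.
have key : forall y, y \in Tst V v -> r (B `|` [fset y]) = r B.
  move=> y yT.
  case: (boolP (y \in Z)) => yZ.
    apply/eqP; rewrite eqn_leq; apply/andP; split; last first.
      by apply: (r_mono hrN); rewrite ?fsubsetUl // fsubUset hB fsub1set (fsubsetP hZN).
    rewrite /B ez; apply: (r_mono hrN) => //.
    rewrite fsubUset fsub1set in_fsetU yZ orbT andbT.
    by apply: fsetUS; apply: fsubsetDl.
  have [p pV zp] : exists2 p, p \in V `\ v & z = ed v p by apply/mem_Tst; exact: (fsubsetP hZ).
  have [q qV yq] : exists2 q, q \in V `\ v & y = ed v q by apply/mem_Tst.
  have pq : p != q by apply/eqP => epq; move: yZ; rewrite yq -epq -zp zZ.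
  move: (pV) (qV); rewrite !in_fsetD1 => /andP [pv pV'] /andP [qv qV'].
  have vp : v != p by rewrite eq_sym.
  have vq : v != q by rewrite eq_sym.
  have img : [fset emap (sw p q) e | e in A `|` Z] = B `|` [fset y].
    apply/fsetP=> e; apply/imfsetP/idP => [[e0 he0 ->]|he].
      have : e0 \in A `|` Z := he0.
      rewrite in_fsetU => /orP [e0A|e0Z].
        have : emap (sw p q) e0 \in [fset emap (sw p q) e | e in A] by apply/imfsetP; exists e0.
        rewrite /A im_complete; last exact: sw_inv.
        have -> : [fset sw p q x | x in V `\ v] = V `\ v.
          apply/fsetP=> x; rewrite mem_im_inv; last exact: sw_inv.
          rewrite /sw; case: (eqVneq x p) => [->|xp]; first by rewrite qV pV.
          by case: (eqVneq x q) => [->|xq] //; rewrite pV qV.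
        by move=> h; rewrite !in_fsetU h.
      case: (eqVneq e0 z) => [->|e0z].
        by rewrite zp emap_ed sw_p sw_fix // -yq !in_fsetU in_fset1 eqxx !orbT.
      have [x xV ex] : exists2 x, x \in V `\ v & e0 = ed v x by apply/mem_Tst; exact: (fsubsetP hZ).
      have xp : x != p by apply/eqP => exp; move: e0z; rewrite ex exp -zp eqxx.
      have xq : x != q by apply/eqP => exq; move: yZ; rewrite yq -exq -ex e0Z.
      by rewrite ex emap_ed !sw_fix // -ex !in_fsetU in_fsetD1 e0z e0Z !orbT.
    move: he; rewrite !in_fsetU in_fset1 => /orP [/orP [eA|]|/eqP ->].
    - exists (emap (sw p q) e).
        have : emap (sw p q) e \in [fset emap (sw p q) e | e in A] by apply/imfsetP; exists e.
        rewrite /A im_complete; last exact: sw_inv.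
        have -> : [fset sw p q x | x in V `\ v] = V `\ v.
          apply/fsetP=> x; rewrite mem_im_inv; last exact: sw_inv.
          rewrite /sw; case: (eqVneq x p) => [->|xp]; first by rewrite qV pV.
          by case: (eqVneq x q) => [->|xq] //; rewrite pV qV.
        by move=> h; rewrite in_fsetU h.
      move: eA; rewrite mem_complete => /and3P [_ _ h3].
      by rewrite [emap _ e]emap_edE emap_ed !sw_inv ed_e.
    - rewrite in_fsetD1 => /andP [ez' eZ]; exists e; first by rewrite in_fsetU eZ orbT.
      have [x xV ex] : exists2 x, x \in V `\ v & e = ed v x by apply/mem_Tst; exact: (fsubsetP hZ).
      have xp : x != p by apply/eqP => exp; move: ez'; rewrite ex exp -zp eqxx.
      have xq : x != q by apply/eqP => exq; move: yZ; rewrite yq -exq -ex eZ.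
      by rewrite ex emap_ed !sw_fix.
    - exists z; first by rewrite in_fsetU zZ orbT.
      by rewrite zp emap_ed sw_p sw_fix.
  by rewrite -img rk_sw.
have hcl := r_closU hrN hB hT key.
have h1 : r N <= r (B `|` Tst V v).
  apply: (r_mono hrN); first by rewrite fsubUset hB hT.
  have -> : N `<=` B `|` Tst V v = (complete (V `\ v) `|` Tst V v `<=` B `|` Tst V v).
    by rewrite -(N_split vV).
  by rewrite /B fsetSU // fsubsetUl.
have h2 : r (A `|` Z) <= r N by apply: (r_mono hrN).
have ez' : r B = r (A `|` Z) := ez.
lia.
Qed.
End Unif.

Lemma sub_card (T : choiceType) (U : {fset T}) k : k <= #|` U| ->
  exists Y : {fset T}, Y `<=` U /\ #|` Y| = k.
Proof.
elim: k => [|k IH] hk; first by exists fset0; rewrite fsub0set cardfs0.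
have [Y [hY cY]] := IH (ltnW hk).
have : ~~ (U `<=` Y).
  by apply/negP => /fsubset_leq_card; rewrite cY; lia.
case/fsubsetPn => y yU yY; exists (y |` Y); split.
  by rewrite fsubUset fsub1set yU hY.
by rewrite cardfsU1 yY cY add1n.
Qed.

Lemma sub_card_mem (T : choiceType) (U : {fset T}) x k : x \in U -> 0 < k <= #|` U| ->
  exists Y : {fset T}, [/\ Y `<=` U, x \in Y & #|` Y| = k].
Proof.
move=> xU /andP [k0 kU].
have hc : k.-1 <= #|` U `\ x| by move: kU; rewrite (cardfsD1 x U) xU; lia.
have [Y [hY cY]] := sub_card hc.
exists (x |` Y); split; first by rewrite fsubUset fsub1set xU (fsubset_trans hY) // fsubsetDl.
  by rewrite fset1U1.
have xY : x \notin Y by apply/negP => /(fsubsetP hY); rewrite in_fsetD1 eqxx.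
by rewrite cardfsU1 xY cY; lia.
Qed.

Definition Kset n : {fset nat} := [fset i | i in iota 0 n].

Lemma mem_Kset n i : (i \in Kset n) = (i < n).
Proof. by rewrite /Kset in_fset /= mem_iota. Qed.

Lemma KsetS n : Kset n.+1 = n |` Kset n.
Proof. by apply/fsetP=> i; rewrite in_fset1U !mem_Kset ltnS leq_eqVlt. Qed.

Lemma card_Kset n : #|` Kset n| = n.
Proof.
elim: n => [|n IH]; first by apply/eqP; rewrite cardfs_eq0; apply/eqP/fsetP=> i; rewrite mem_Kset inE.
by rewrite KsetS cardfsU1 mem_Kset ltnn IH.
Qed.

Section SI.
Variable rk : graph -> {fset edge} -> nat.
Hypothesis hfam : graph_matroid_family rk.

Lemma hrG G : is_graph G -> matroid_rank G (rk G).
Proof. move=> hG X Y hX hY; have := @rk_mat rk hfam G hG X Y hX hY. done. Qed.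

Lemma rho_res V X : X `<=` V -> rk (complete V) (complete X) = rho rk X.
Proof. by move=> h; rewrite /rho (rk_res hfam (@is_graph_complete V)) // complete_sub. Qed.

Lemma rho_mono W W' : W `<=` W' -> rho rk W <= rho rk W'.
Proof.
move=> h; rewrite -(rho_res h) /rho.
by apply: (r_mono (hrG (@is_graph_complete W'))); rewrite ?fsubset_refl ?complete_sub.
Qed.

Lemma rho_size n : forall W W', #|` W `\` W'| = n -> #|` W| = #|` W'| -> rho rk W = rho rk W'.
Proof.
elim: n {-2}n (leqnn n) => [|n IH] m hm W W' hc hcard.
  have hsub : W `<=` W'.
    apply/fsubsetP=> x xW; apply/negPn/negP => xW'.
    by have := cardfsD1 x (W `\` W'); rewrite hc in_fsetD xW xW' /=; lia.
  have : W == W' by rewrite eqEfcard hsub hcard leqnn.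
  by move/eqP ->.
case: (fset_0Vmem (W `\` W')) => [h0|[p]].
  by apply: (IH 0) => //; rewrite h0 cardfs0.
rewrite in_fsetD => /andP [pW' pW].
have : ~~ (W' `<=` W).
  apply/negP => hs.
  have : W' `<` W.
    by rewrite fproperEneq hs andbT; apply/eqP => ew; move: pW'; rewrite ew pW.
  by move/fproper_ltn_card; rewrite hcard ltnn.
case/fsubsetPn=> q qW' qW.
set W1 := [fset sw p q x | x in W].
have e1 : rho rk W1 = rho rk W by apply: rho_sw.
have c1 : #|` W1| = #|` W| by rewrite card_imfset //=; apply: sw_inj.
have m1 : forall x, (x \in W1) = (sw p q x \in W) by move=> x; rewrite mem_im_inv //; apply: sw_inv.
have hsub : W1 `\` W' `<=` (W `\` W') `\ p.
  apply/fsubsetP=> x; rewrite in_fsetD m1 in_fsetD1 in_fsetD => /andP [xW' hx].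
  case: (eqVneq x p) => [ep|xp] /=; first by move: hx; rewrite ep sw_p (negbTE qW).
  case: (eqVneq x q) => [eq|xq]; first by move: xW'; rewrite eq qW'.
  by move: hx; rewrite sw_fix // => ->; rewrite xW'.
have hlt : #|` W1 `\` W'| < m.
  have := fsubset_leq_card hsub.
  have := cardfsD1 p (W `\` W'); rewrite in_fsetD pW pW' hc /=.
  lia.
rewrite -e1; apply: (IH #|` W1 `\` W'|) => //; first by lia.
by rewrite c1.
Qed.

Lemma grow W u U u' : u \notin W -> 0 < #|` W| -> rho rk (u |` W) = rho rk W ->
  u' \notin U -> #|` W| <= #|` U| -> rho rk (u' |` U) = rho rk U.
Proof.
move=> uW W0 eW u'U WU.
set V' := u' |` U.
have u'V : u' \in V' by rewrite fset1U1.
have VU : V' `\ u' = U by rewrite /V' fsetU1K.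
have hr := hrG (@is_graph_complete V').
have hU : complete U `<=` complete V' by apply: complete_sub; apply: fsubsetU1.
have hT := Tst_sub u'V.
have key : forall y, y \in Tst V' u' ->
    rk (complete V') (complete U `|` [fset y]) = rk (complete V') (complete U).
  move=> y /mem_Tst [x]; rewrite VU => xU ->.
  have [W' [hW' xW' cW']] := @sub_card_mem _ U x #|` W| xU (introT andP (conj W0 WU)).
  have u'W' : u' \notin W' by apply/negP => /(fsubsetP hW'); apply/negP.
  have e1 : rho rk (u' |` W') = rho rk W'.
    rewrite (@rho_size _ (u' |` W') (u |` W) erefl) ?eW; last by rewrite !cardfsU1 uW u'W' cW'.
    by apply: (rho_size erefl); rewrite cW'.
  have hW'V : W' `<=` V' by apply: fsubset_trans hW' _; apply: fsubsetU1.
  have hW'V2 : u' |` W' `<=` V' by rewrite fsubUset fsub1set u'V hW'V.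
  have hy : ed u' x \in complete (u' |` W').
    apply: ed_complete; rewrite ?fset1U1 ?in_fset1U ?xW' ?orbT //.
    by apply/negP => /eqP ex; move: u'U; rewrite ex (fsubsetP hW' _ xW').
  have s1 : complete W' `<=` complete U by apply: complete_sub.
  have hyV : [fset ed u' x] `<=` complete V'.
    by rewrite fsub1set (fsubsetP (complete_sub hW'V2)).
  have d := r_dim hr hU hyV s1.
  have m1 : rk (complete V') (complete W' `|` [fset ed u' x]) <= rk (complete V') (complete (u' |` W')).
    apply: (r_mono hr); first by apply: complete_sub.
    rewrite fsubUset fsub1set hy andbT; apply: complete_sub; apply: fsubsetU1.
  have m2 : rk (complete V') (complete U) <= rk (complete V') (complete U `|` [fset ed u' x]).
    by apply: (r_mono hr); rewrite ?fsubsetUl // fsubUset hU hyV.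
  have r1 := rho_res (fsubsetU1 u' U).
  have r2 := rho_res hW'V.
  have r3 := rho_res hW'V2.
  rewrite -/V' in r1.
  move: d m1 m2; rewrite r2 r3 e1 r1; clear; lia.
have hcl := r_closU hr hU hT key.
have NS := N_split u'V; rewrite VU in NS; rewrite -NS in hcl.
by rewrite -(rho_res (fsubsetU1 u' U)) -hcl /rho.
Qed.
End SI.

Section SI2.
Variable rk : graph -> {fset edge} -> nat.
Hypothesis hfam : graph_matroid_family rk.
Hypothesis hunb : unbounded rk.

Lemma SI V v : v \in V -> 1 < #|` V| -> rho rk (V `\ v) < rho rk V.
Proof.
move=> vV hV; rewrite ltnNge; apply/negP => hle.
set W := V `\ v.
have vW : v \notin W by rewrite /W fsetD11.
have VW : v |` W = V by rewrite /W fsetD1K.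
have eW : rho rk (v |` W) = rho rk W.
  by rewrite VW; apply/eqP; rewrite eqn_leq hle (rho_mono hfam) // fsubsetDl.
have W0 : 0 < #|` W| by move: hV; rewrite /W (cardfsD1 v V) vV /=; lia.
set n := #|` W|.
have hK : forall N, n <= N -> rho rk (Kset N.+1) = rho rk (Kset N).
  move=> N hN; rewrite KsetS; apply: (grow hfam vW W0 eW); first by rewrite mem_Kset ltnn.
  by rewrite card_Kset.
have hK2 : forall d, rho rk (Kset (n + d)) = rho rk (Kset n).
  elim=> [|d IH]; first by rewrite addn0.
  by rewrite addnS hK ?IH // leq_addr.
have [N hN] := hunb (rho rk (Kset n)).
have hN' : rho rk (Kset n) < rho rk (Kset N) := hN.
case: (leqP n N) => h.
  by move: hN'; rewrite -(subnKC h) hK2 ltnn.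
have hs : Kset N `<=` Kset n.
  by apply/fsubsetP=> i; rewrite !mem_Kset => hi; apply: ltn_trans h.
have := rho_mono hfam hs; lia.
Qed.
End SI2.

Section Star.
Variable rk : graph -> {fset edge} -> nat.
Hypothesis hfam : graph_matroid_family rk.
Hypothesis hunb : unbounded rk.
Variable V : {fset nat}.
Local Notation N := (complete V).
Local Notation r := (rk (complete V)).

Lemma nonloop x e : x \in V -> e \in Tst V x ->
  r (complete (V `\ x)) < r (complete (V `\ x) `|` [fset e]).
Proof.
move=> xV eT.
have [y yV ey] := mem_Tst _ _ _ eT.
have hV : 1 < #|` V|.
  move: yV; rewrite in_fsetD1 => /andP [yx yV'].
  rewrite (cardfsD1 x V) xV (cardfsD1 y (V `\ x)) in_fsetD1 yx yV' /=; lia.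
have := SI hfam hunb xV hV.
rewrite -(rho_res hfam (fsubsetDl V [fset x])) -(rho_res hfam (fsubset_refl V)).
have hs : [fset e] `<=` Tst V x by rewrite fsub1set.
case: (uniform hfam xV hs) => ->; rewrite ?cardfs1; lia.
Qed.

Lemma star_indep v X : v \in V -> X `<=` Tst V v -> r X = #|` X|.
Proof.
move=> vV hX.
have hr : matroid_rank N r := @hrN rk hfam V.
have hXN : X `<=` N := fsubset_trans hX (Tst_sub vV).
have := @r_coloops _ _ hr fset0 X (fsub0set _) hXN.
rewrite fset0U (r0 hr) add0n; apply=> e eX.
rewrite fset0U.
have [x xV ex] := mem_Tst _ _ _ (fsubsetP hX e eX).
move: (xV); rewrite in_fsetD1 => /andP [xv xV'].
have hAx : complete (V `\ x) `<=` N := A_sub V x.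
have hsub : X `\ e `<=` complete (V `\ x).
  apply/fsubsetP=> e'; rewrite in_fsetD1 => /andP [e'e e'X].
  have [y yV ey] := mem_Tst _ _ _ (fsubsetP hX e' e'X).
  move: (yV); rewrite in_fsetD1 => /andP [yv yV'].
  have yx : y != x by apply/eqP => eyx; move: e'e; rewrite ey ex eyx eqxx.
  rewrite ey; apply: ed_complete; rewrite ?in_fsetD1 ?yx ?yV' ?vV ?andbT //.
    by rewrite eq_sym xv.
  by rewrite eq_sym.
have eT : e \in Tst V x.
  rewrite ex ed_sym; apply: ed_in_Tst => //; by rewrite eq_sym.
have hl := nonloop xV' eT.
have heN : [fset e] `<=` N by rewrite fsub1set (fsubsetP hXN).
have d := r_dim hr hAx heN hsub.
have -> : X = (X `\ e) `|` [fset e].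
  apply/fsetP=> a; rewrite !inE; case: (eqVneq a e) => [->|] /=; first by rewrite eX.
  by rewrite orbF.
have -> : ((X `\ e) `|` [fset e]) `\ e = X `\ e.
  apply/fsetP=> a; rewrite !inE; case: (eqVneq a e) => //=; by rewrite orbF.
lia.
Qed.
End Star.

Lemma card_imfset_le (T T' : choiceType) (f : T -> T') (A : {fset T}) :
  #|` [fset f x | x in A]| <= #|` A|.
Proof. by apply: leq_trans (leq_imfset_card _ _ _) _. Qed.

Definition star (E : {fset edge}) v := [fset e in E | (e.1 == v) || (e.2 == v)].
Definition del (E : {fset edge}) v := [fset e in E | (e.1 != v) && (e.2 != v)].

Lemma mem_star E v e : (e \in star E v) = (e \in E) && ((e.1 == v) || (e.2 == v)).
Proof. by rewrite /star !inE. Qed.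

Lemma mem_del E v e : (e \in del E v) = (e \in E) && ((e.1 != v) && (e.2 != v)).
Proof. by rewrite /del !inE. Qed.

Lemma adj_ed H a b : ed a b \in H -> adj H a b.
Proof. by rewrite /adj /ed; case: (leqP a b) => _ h; apply/orP; [left|right]; exact h. Qed.

Lemma adj_edge H a b : is_graph H -> adj H a b -> ed a b \in H.
Proof.
move=> hH; rewrite /adj => /orP [] h; have := hH _ h => /= hlt.
  by rewrite /ed (minn_idPl (ltnW hlt)) (maxn_idPr (ltnW hlt)).
by rewrite /ed (minn_idPr (ltnW hlt)) (maxn_idPl (ltnW hlt)).
Qed.

Lemma adj_irr G a : is_graph G -> ~~ adj G a a.
Proof. by move=> hG; rewrite /adj orbb; apply/negP => /hG /=; rewrite ltnn. Qed.

Lemma kc_mono G a b : k_connected G a -> b <= a -> k_connected G b.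
Proof.
case=> h1 h2 hba; split; first by apply: leq_ltn_trans h1.
by move=> S hS hc; apply: h2 => //; apply: leq_trans hba.
Qed.

Lemma ends_vertices G e : e \in G -> (e.1 \in vertices G) && (e.2 \in vertices G).
Proof. by move=> eG; apply/andP; split; apply/mem_vertices; exists e; rewrite ?eqxx ?orbT. Qed.

Lemma adj_vertices G a b : adj G a b -> (a \in vertices G) && (b \in vertices G).
Proof. by rewrite /adj => /orP [] /ends_vertices //= /andP [-> ->]. Qed.

Lemma deg_ge G k v : is_graph G -> k_connected G k -> v \in vertices G -> k <= #|` star G v|.
Proof.
move=> hG [hk hc] vV; rewrite leqNgt; apply/negP => hlt.
set S := [fset oth v e | e in star G v].
have cS : #|` S| < k by apply: leq_ltn_trans (card_imfset_le _ _) hlt.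
have hSV : S `<=` vertices G.
  apply/fsubsetP=> x /imfsetP [e /=]; rewrite mem_star => /andP [eG _] ->.
  by rewrite /oth; case: ifP => _; case/andP: (ends_vertices eG).
have vS : v \notin S.
  apply/negP => /imfsetP [e /=]; rewrite mem_star => /andP [eG h] /eqP.
  rewrite /oth; case: ifP => [/eqP e1|e1] ev; move: (hG e eG).
    by rewrite e1 (eqP ev) ltnn.
  by move: e1; rewrite eq_sym ev.
have hD : 0 < #|` (vertices G `\` S) `\ v|.
  have := cardfsD1 v (vertices G `\` S); rewrite in_fsetD vS vV /=.
  have := cardfsD (vertices G) S.
  have := fsubset_leq_card (fsubsetIr (vertices G) S).
  move: cS hk; clear; nlia.
case: (fset_0Vmem ((vertices G `\` S) `\ v)) => [h0|[w]]; first by move: hD; rewrite h0 cardfs0.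
rewrite in_fsetD1 => /andP [wv wVS].
have vVS : v \in vertices G `\` S by rewrite in_fsetD vS vV.
have [p /andP [hp hl]] := hc S hSV cS v w vVS wVS.
case: p hp hl => [|y p] /=; first by move=> _ /eqP ev; move: wv; rewrite ev eqxx.
case/andP=> /andP [ha yS] _ _; move/negP: yS; apply.
have eG := adj_edge hG ha; apply/imfsetP.
by exists (ed v y); rewrite ?oth_ed // mem_star eG ed_touch.
Qed.

Lemma ed1 a b : ((ed a b).1 == a) || ((ed a b).1 == b).
Proof. by rewrite /ed; case: (leqP a b) => _ /=; rewrite eqxx ?orbT. Qed.

Lemma ed2 a b : ((ed a b).2 == a) || ((ed a b).2 == b).
Proof. by rewrite /ed; case: (leqP a b) => _ /=; rewrite eqxx ?orbT. Qed.

Lemma del_graph G v : is_graph G -> is_graph (del G v).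
Proof. by move=> hG e; rewrite mem_del => /andP [/hG]. Qed.

Lemma del_sub G v : del G v `<=` G.
Proof. by apply/fsubsetP=> e; rewrite mem_del => /andP []. Qed.

Lemma adj_del G v x y : adj G x y -> x != v -> y != v -> adj (del G v) x y.
Proof.
rewrite /adj !mem_del /= => /orP [] h xv yv; rewrite h xv yv ?orbT //.
Qed.

Lemma card2 (T : choiceType) (V : {fset T}) a : 1 < #|` V| -> exists2 b, b \in V & b != a.
Proof.
move=> h; have : 0 < #|` V `\ a| by move: h; rewrite (cardfsD1 a V); case: (a \in V) => /=; nlia.
rewrite cardfs_gt0; case: (fset_0Vmem (V `\ a)) => [->|[b]]; first by rewrite eqxx.
by rewrite in_fsetD1 => /andP [ba bV] _; exists b.
Qed.

Lemma del_vertices G k v : is_graph G -> k_connected G k -> 1 < k -> v \in vertices G ->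
  vertices (del G v) = vertices G `\ v.
Proof.
move=> hG [hk hc] k1 vV; apply/fsetP=> w; apply/idP/idP.
  case/mem_vertices=> e; rewrite mem_del => /andP [eG /andP [e1 e2]] /orP [] /eqP ->;
  by rewrite in_fsetD1 ?e1 ?e2; case/andP: (ends_vertices eG) => h1 h2; rewrite ?h1 ?h2.
rewrite in_fsetD1 => /andP [wv wV].
have h2 : 1 < #|` vertices G `\ v| by move: hk; rewrite (cardfsD1 v) vV /=; nlia.
have [y yV yw] := card2 w h2.
have hS : [fset v] `<=` vertices G by rewrite fsub1set.
have cS : #|` [fset v]| < k by rewrite cardfs1.
have wVS : w \in vertices G `\` [fset v] by rewrite in_fsetD1 wv wV.
have yVS : y \in vertices G `\` [fset v] := yV.
have [p /andP [hp hl]] := hc _ hS cS w y wVS yVS.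
case: p hp hl => [|z p] /=; first by move=> _ /eqP eyw; move: yw; rewrite eyw eqxx.
case/andP=> /andP [ha zv] _ _.
apply/mem_vertices; exists (ed w z).
  rewrite mem_del (adj_edge hG ha) andTb.
  have := ed1 w z; have := ed2 w z.
  move: zv; rewrite in_fset1 => zv.
  by case/orP => /eqP -> ; case/orP => /eqP ->; rewrite ?wv ?zv.
by rewrite ed_ends eqxx.
Qed.

Lemma path_del G v S p x : x != v ->
  path (fun a b => adj G a b && (b \notin v |` S)) x p ->
  path (fun a b => adj (del G v) a b && (b \notin S)) x p.
Proof.
elim: p x => [//|y p IH] x xv /= /andP [/andP [ha hy] hp].
move: hy; rewrite in_fset1U negb_or => /andP [yv yS].
by rewrite adj_del ?yS //= IH.
Qed.

Lemma del_kc G k v : is_graph G -> k_connected G k -> 1 < k -> v \in vertices G ->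
  k_connected (del G v) k.-1.
Proof.
move=> hG hk k1 vV; have hV := del_vertices hG hk k1 vV.
case: hk => hk hc; split.
  by rewrite hV; move: hk; rewrite (cardfsD1 v) vV /=; nlia.
move=> S; rewrite hV => hS cS u w uS wS.
have hS' : v |` S `<=` vertices G.
  by rewrite fsubUset fsub1set vV (fsubset_trans hS) // fsubsetDl.
have cS' : #|` v |` S| < k by rewrite cardfsU1; case: (v \notin S) => /=; nlia.
have uv : u != v by move: uS; rewrite !inE => /and3P [].
have uS' : u \in vertices G `\` (v |` S).
  by move: uS; rewrite !inE negb_or => /and3P [-> -> ->].
have wS' : w \in vertices G `\` (v |` S).
  by move: wS; rewrite !inE negb_or => /and3P [-> -> ->].
have [p /andP [hp hl]] := hc _ hS' cS' u w uS' wS'.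
by exists p; rewrite hl andbT; apply: path_del.
Qed.

Lemma star_pos E v e : e \in E -> (e.1 == v) || (e.2 == v) -> 0 < #|` star E v|.
Proof. by move=> eE h; rewrite cardfs_gt0; apply/fset0Pn; exists e; rewrite mem_star eE h. Qed.

Lemma mixed_path G E1 E2 p x : is_graph G -> E1 `|` E2 = G ->
  path (fun a b => adj G a b && (b \notin fset0)) x p ->
  0 < #|` star E1 x| -> 0 < #|` star E2 (last x p)| ->
  exists v, 0 < #|` star E1 v| /\ 0 < #|` star E2 v|.
Proof.
move=> hG hE; elim: p x => [|y p IH] x /=; first by move=> _ h1 h2; exists x.
move=> /andP [/andP [ha _] hp] h1 h2.
case: (posnP #|` star E2 x|) => [h0|hx]; last by exists x.
apply: (IH y hp _ h2).
have eG := adj_edge hG ha.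
move: (eG); rewrite -hE in_fsetU => /orP [e1|e2].
  by apply: (star_pos e1); rewrite ed_sym ed_touch.
have : 0 < #|` star E2 x| by apply: (star_pos e2); rewrite ed_touch.
by rewrite h0.
Qed.

Lemma mixed G k E1 E2 : is_graph G -> k_connected G k -> 0 < k -> E1 `|` E2 = G ->
  E1 != fset0 -> E2 != fset0 ->
  exists v, 0 < #|` star E1 v| /\ 0 < #|` star E2 v|.
Proof.
move=> hG [hk hc] k0 hE /fset0Pn [e1 he1] /fset0Pn [e2 he2].
have sV : forall e, e \in G -> e.1 \in vertices G `\` fset0.
  by move=> e eG; rewrite in_fsetD in_fset0; case/andP: (ends_vertices eG).
have he1G : e1 \in G by rewrite -hE in_fsetU he1.
have he2G : e2 \in G by rewrite -hE in_fsetU he2 orbT.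
have c0 : #|` @fset0 nat| < k by rewrite cardfs0.
have [p /andP [hp /eqP hl]] := hc fset0 (fsub0set _) c0 _ _ (sV _ he1G) (sV _ he2G).
apply: (mixed_path hG hE hp); first by apply: (star_pos he1); rewrite eqxx.
by rewrite hl; apply: (star_pos he2); rewrite eqxx.
Qed.

Lemma card_Tst V v : #|` Tst V v| = #|` V `\ v|.
Proof. by rewrite /Tst card_imfset //=; apply: ed_inj. Qed.

Lemma helper V v Z c : v \in V -> Z `<=` Tst V v -> 0 < #|` Z| -> c <= #|` Z| ->
  1 < #|` V `\ v| -> c < #|` V| ->
  vertices (complete (V `\ v) `|` Z) = V /\ k_connected (complete (V `\ v) `|` Z) c.
Proof.
move=> vV hZ Z0 cZ hW cV.
set H := complete (V `\ v) `|` Z.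
have hHN : H `<=` complete V by rewrite fsubUset A_sub (fsubset_trans hZ) ?Tst_sub.
have adjA : forall a b, a \in V `\ v -> b \in V `\ v -> a != b -> adj H a b.
  by move=> a b ha hb hab; apply: adj_ed; rewrite in_fsetU ed_complete.
have hV : vertices H = V.
  apply/fsetP=> w; apply/idP/idP.
    case/mem_vertices=> e eH; have := fsubsetP hHN e eH.
    by rewrite mem_complete => /and3P [h1 h2 _] /orP [] /eqP ->.
  move=> wV; case: (eqVneq w v) => [->|wv].
    have : Z != fset0 by rewrite -cardfs_gt0.
    case/fset0Pn => z zZ.
    have [y _ ey] := mem_Tst _ _ _ (fsubsetP hZ z zZ).
    apply/mem_vertices; exists z; first by rewrite in_fsetU zZ orbT.
    by rewrite ey ed_ends eqxx.
  have wW : w \in V `\ v by rewrite in_fsetD1 wv wV.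
  have [y yW yw] := card2 w hW.
  apply/mem_vertices; exists (ed w y); first by rewrite in_fsetU ed_complete // eq_sym.
  by rewrite ed_ends eqxx.
split => //; split; first by rewrite hV.
rewrite hV => S hS cS u w uS wS.
have : ~~ (Z `<=` [fset ed v s | s in S]).
  apply/negP => /fsubset_leq_card h.
  by have := card_imfset_le (ed v) S; nlia.
case/fsubsetPn=> z zZ zS.
have [x xW ex] := mem_Tst _ _ _ (fsubsetP hZ z zZ).
have xS : x \notin S by apply/negP => xS; move/negP: zS; apply; apply/imfsetP; exists x.
have avx : adj H v x by apply: adj_ed; rewrite in_fsetU -ex zZ orbT.
have axv : adj H x v by apply: adj_ed; rewrite ed_sym in_fsetU -ex zZ orbT.
move: uS wS; rewrite !in_fsetD => /andP [uS uV] /andP [wS wV].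
have xv : x != v by move: xW; rewrite in_fsetD1 => /andP [].
case: (eqVneq u w) => [<-|uw]; first by exists [::]; rewrite /= eqxx.
case: (eqVneq u v) => [eu|uv].
  have wv : w != v by rewrite -eu eq_sym.
  have wW : w \in V `\ v by rewrite in_fsetD1 wv wV.
  case: (eqVneq x w) => [exw|xw].
    by exists [:: w]; rewrite /= eqxx andbT eu -exw avx xS.
  by exists [:: x; w]; rewrite /= eqxx !andbT eu avx xS wS adjA.
case: (eqVneq w v) => [ew|wv].
  have uW : u \in V `\ v by rewrite in_fsetD1 uv uV.
  case: (eqVneq u x) => [eux|ux].
    by exists [:: w]; rewrite /= eqxx andbT ew eux axv -ew wS.
  by exists [:: x; w]; rewrite /= eqxx !andbT ew axv xS adjA // -ew wS.
have uW : u \in V `\ v by rewrite in_fsetD1 uv uV.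
have wW : w \in V `\ v by rewrite in_fsetD1 wv wV.
by exists [:: w]; rewrite /= eqxx andbT adjA // wS.
Qed.

Lemma is_graph_sub G H : is_graph G -> H `<=` G -> is_graph H.
Proof. by move=> hG hH e eH; apply: hG; apply: (fsubsetP hH). Qed.

Lemma oth_ne v e : e.1 < e.2 -> oth v e != v.
Proof.
rewrite /oth; case: ifP => [/eqP ->|/negbT] //.
by move=> h; apply/negP => /eqP e2; move: h; rewrite e2 ltnn.
Qed.

Lemma oth_mem v e : (oth v e == e.1) || (oth v e == e.2).
Proof. by rewrite /oth; case: ifP; rewrite eqxx ?orbT. Qed.

Lemma star_Tst G E v : is_graph G -> E `<=` G -> star E v `<=` Tst (vertices G) v.
Proof.
move=> hG hE; apply/fsubsetP=> e; rewrite mem_star => /andP [eE h].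
have eG := fsubsetP hE e eE.
rewrite (ed_oth (hG e eG) h); apply: ed_in_Tst; last exact: oth_ne (hG e eG).
by apply/mem_vertices; exists e => //; exact: oth_mem.
Qed.

Lemma del_A E V v : E `<=` complete V -> del E v `<=` complete (V `\ v).
Proof.
move=> hE; apply/fsubsetP=> e; rewrite mem_del => /andP [eE /andP [e1 e2]].
move: (fsubsetP hE e eE); rewrite !mem_complete !in_fsetD1 e1 e2 /=.
by case/and3P=> -> -> ->.
Qed.

Lemma split_star E v : E = del E v `|` star E v.
Proof.
apply/fsetP=> e; rewrite in_fsetU mem_del mem_star.
by case: (e \in E); case: (e.1 == v); case: (e.2 == v).
Qed.

Lemma del_U E1 E2 v : del E1 v `|` del E2 v = del (E1 `|` E2) v.
Proof.
apply/fsetP=> e; rewrite in_fsetU !mem_del in_fsetU.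
by case: (e \in E1); case: (e \in E2); case: (e.1 != v); case: (e.2 != v).
Qed.

Section Main.
Variable rk : graph -> {fset edge} -> nat.
Hypothesis hfam : graph_matroid_family rk.
Hypothesis hunb : unbounded rk.
Variable c : nat.
Hypothesis hLY : lovasz_yemini rk c.

Lemma delta_le V v : v \in V -> 1 < #|` V `\ v| -> c < #|` V| -> maxn c 1 <= #|` V `\ v| ->
  rk (complete V) (complete V) <= rk (complete V) (complete (V `\ v)) + maxn c 1.
Proof.
move=> vV hW hc hm.
have [Z [hZ cZ]] : exists Z, Z `<=` Tst V v /\ #|` Z| = maxn c 1.
  by apply: sub_card; rewrite card_Tst.
have Z0 : 0 < #|` Z| by rewrite cZ leq_max orbT.
have cZ' : c <= #|` Z| by rewrite cZ leq_maxl.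
have [hVH hkc] := helper vV hZ Z0 cZ' hW hc.
set H := complete (V `\ v) `|` Z.
have hHN : H `<=` complete V by rewrite fsubUset A_sub (fsubset_trans hZ) ?Tst_sub.
have gH : is_graph H := is_graph_sub (@is_graph_complete V) hHN.
have rig := hLY gH hkc.
rewrite /rigid /rnk hVH (rk_res hfam (@is_graph_complete V) hHN (fsubset_refl H)) in rig.
have hr : matroid_rank (complete V) (rk (complete V)) := @hrN rk hfam V.
have := r_addle hr (A_sub V v) (fsubset_trans hZ (Tst_sub vV)).
rewrite -/H rig cZ; done.
Qed.

Local Notation rV G := (rk (complete (vertices G))).

Lemma main_ind m : maxn c 1 <= m -> forall j, 0 < j -> forall G, is_graph G ->
  k_connected G (m + j) -> forall E1 E2, E1 `|` E2 = G -> E1 `&` E2 = fset0 ->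
  j <= rk G E1 -> j <= rk G E2 -> rk G E1 + rk G E2 <= rk G G + j - 1 -> False.
Proof.
move=> hm; elim/ltn_ind => j IH j0 G hG hkc E1 E2 hU hI h1 h2 hs.
have m1 : 1 <= m by apply: leq_trans hm; rewrite leq_maxr.
have cm : c <= m by apply: leq_trans hm; rewrite leq_maxl.
have hGN : G `<=` complete (vertices G) := sub_complete_vertices hG.
have gN := @is_graph_complete (vertices G).
have hr : matroid_rank (complete (vertices G)) (rV G) := @hrN rk hfam (vertices G).
have hE1 : E1 `<=` G by rewrite -hU fsubsetUl.
have hE2 : E2 `<=` G by rewrite -hU fsubsetUr.
have rG : forall X, X `<=` G -> rk G X = rV G X := fun X hX => rk_res hfam gN hGN hX.
rewrite !rG ?fsubset_refl // in h1 h2 hs.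
have E1n : E1 != fset0 by apply/eqP => e; move: h1; rewrite e (r0 hr); nlia.
have E2n : E2 != fset0 by apply/eqP => e; move: h2; rewrite e (r0 hr); nlia.
have mj0 : 0 < m + j by nlia.
have [v [a0 b0]] := mixed hG hkc mj0 hU E1n E2n.
have vV : v \in vertices G.
  move: a0; rewrite cardfs_gt0 => /fset0Pn [e]; rewrite mem_star => /andP [eE h].
  by apply/mem_vertices; exists e; rewrite ?(fsubsetP hE1) // ![v == _]eq_sym.
have hk2 : 1 < m + j by nlia.
have hdeg := deg_ge hG hkc vV.
have hab : #|` star G v| <= #|` star E1 v| + #|` star E2 v|.
  have : star G v `<=` star E1 v `|` star E2 v.
    apply/fsubsetP=> e; rewrite in_fsetU !mem_star -hU in_fsetU.
    by case: (e \in E1); case: (e \in E2); case: (e.1 == v); case: (e.2 == v).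
  move/fsubset_leq_card; have := cardfsUI (star E1 v) (star E2 v); nlia.
have hcard : m + j < #|` vertices G| by case: hkc.
set Gv := del G v.
have hGv : vertices Gv = vertices G `\ v := del_vertices hG hkc hk2 vV.
have kGv : k_connected Gv (m + j).-1 := del_kc hG hkc hk2 vV.
have gGv : is_graph Gv := @del_graph G v hG.
have hGvN : Gv `<=` complete (vertices G) := fsubset_trans (del_sub G v) hGN.
have hA : complete (vertices G `\ v) `<=` complete (vertices G) := A_sub _ v.
have cmj : c <= (m + j).-1 by nlia.
have V1 : 1 < #|` vertices G| by nlia.
have cV : c < #|` vertices G| by nlia.
have cv := cardfsD1 v (vertices G); rewrite vV /= in cv.
have mW : maxn c 1 <= #|` vertices G `\ v| by nlia.
have rigG := hLY hG (kc_mono hkc (leq_trans cm (leq_addr j m))).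
rewrite /rigid /rnk rG ?fsubset_refl // in rigG.
have rigGv := hLY gGv (kc_mono kGv cmj).
rewrite /rigid /rnk hGv (rk_res hfam gN hGvN (fsubset_refl _)) -/(rho rk _) in rigGv.
rewrite -(rho_res hfam (fsubsetDl (vertices G) [fset v])) in rigGv.
have hSI := SI hfam hunb vV V1.
rewrite -(rho_res hfam (fsubsetDl (vertices G) [fset v])) -(rho_res hfam (fsubset_refl _)) in hSI.
have hW : 1 < #|` vertices G `\ v| by nlia.
have hdl := delta_le vV hW cV mW.
have hZ1 := star_Tst v hG hE1.
have hZ2 := star_Tst v hG hE2.
have hZ1N := fsubset_trans hZ1 (Tst_sub vV).
have hZ2N := fsubset_trans hZ2 (Tst_sub vV).
have u1 := uniform hfam vV hZ1.
have u2 := uniform hfam vV hZ2.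
have hE1' : del E1 v `<=` complete (vertices G `\ v) := del_A v (fsubset_trans hE1 hGN).
have hE2' : del E2 v `<=` complete (vertices G `\ v) := del_A v (fsubset_trans hE2 hGN).
have g1 := r_dim hr hA hZ1N hE1'.
have g2 := r_dim hr hA hZ2N hE2'.
rewrite -split_star in g1; rewrite -split_star in g2.
have hE1'N := fsubset_trans hE1' hA.
have hE2'N := fsubset_trans hE2' hA.
have sm := r_sub hr hE1'N hE2'N.
rewrite del_U hU -/Gv rigGv in sm.
have si1 := star_indep hfam hunb vV hZ1.
have si2 := star_indep hfam hunb vV hZ2.
have mo1 : rV G (star E1 v) <= rV G E1.
  by apply: (r_mono hr); [exact: fsubset_trans hE1 hGN | apply/fsubsetP=> e; rewrite mem_star => /andP []].
have mo2 : rV G (star E2 v) <= rV G E2.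
  by apply: (r_mono hr); [exact: fsubset_trans hE2 hGN | apply/fsubsetP=> e; rewrite mem_star => /andP []].
case: (leqP (rV G (complete (vertices G `\ v))) (rV G (del E2 v))) => c2.
  by move: u2 g2 c2 si1 mo1 h1 hs hab hdeg rigG hdl hm j0; clear; nlia.
case: (leqP (rV G (complete (vertices G `\ v))) (rV G (del E1 v))) => c1.
  by move: u1 g1 c1 si2 mo2 h2 hs hab hdeg rigG hdl hm j0; clear; nlia.
have hsub1 : del E1 v `<=` Gv by apply/fsubsetP=> e; rewrite !mem_del => /andP [/(fsubsetP hE1) -> ->].
have hsub2 : del E2 v `<=` Gv by apply/fsubsetP=> e; rewrite !mem_del => /andP [/(fsubsetP hE2) -> ->].
have rGv : forall X, X `<=` Gv -> rk Gv X = rV G X := fun X hX => rk_res hfam gN hGvN hX.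
have hsum : rV G (del E1 v) + rV G (del E2 v) + 2 <= rV G (complete (vertices G `\ v)) + j.
  by move: u1 u2 g1 g2 hs rigG hSI hdl hab hdeg hm a0 b0 j0; clear; nlia.
apply: (IH (rV G (del E1 v) + rV G (del E2 v) + 1 - rV G (complete (vertices G `\ v))) _ _ Gv gGv _ (del E1 v) (del E2 v)).
- by move: hsum sm; clear; nlia.
- by move: sm; clear; nlia.
- by apply: (kc_mono kGv); move: hsum sm; clear; nlia.
- by rewrite del_U hU.
- apply/eqP; rewrite -fsubset0 -hI; apply/fsubsetP=> e; rewrite !in_fsetI !mem_del.
  by case: (e \in E1); case: (e \in E2); case: (e.1 != v); case: (e.2 != v).
- by rewrite rGv //; move: c2 sm; clear; nlia.
- by rewrite rGv //; move: c1 sm; clear; nlia.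
- rewrite !rGv ?fsubset_refl // rigGv; move: sm; clear; nlia.
Qed.
End Main.

Theorem proposition3p7 (rk : graph -> {fset edge} -> nat) (d t c k : nat)
  (G : graph) :
  graph_matroid_family rk -> nontrivial rk -> unbounded rk ->
  dimensionality rk d -> threshold rk d t -> lovasz_yemini rk c ->
  is_graph G -> 0 < k -> k_connected G (maxn t c + k) ->
  vertically_connected rk G k.+1.
Proof.
move=> hfam _ hunb _ [[C [hC _ hCv]] _] hLY hG k0 hkc.
case: hC => gC hCr _.
have t1 : 1 <= t.
  have : C != fset0 by rewrite -cardfs_gt0; move: hCr; rewrite /rnk; nlia.
  case/fset0Pn=> e eC.
  have hlt := gC e eC.
  have hs : [fset e.1; e.2] `<=` vertices C.
    by apply/fsubsetP=> x; rewrite !inE => hx; apply/mem_vertices; exists e.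
  have := fsubset_leq_card hs.
  rewrite cardfs2 hCv; case: eqP => [h|_] /=; first by move: hlt; rewrite h ltnn.
  by nlia.
have hm : maxn c 1 <= maxn t c.
  by rewrite geq_max leq_maxr (leq_trans t1) // leq_maxl.
split.
  have hV : 0 < #|` vertices G| by case: hkc => h _; nlia.
  move: hV; rewrite cardfs_gt0 => /fset0Pn [v vV].
  have hdeg := deg_ge hG hkc vV.
  have hsT := star_Tst v hG (fsubset_refl G).
  have si := star_indep hfam hunb vV hsT.
  have hGN := sub_complete_vertices hG.
  have gN := @is_graph_complete (vertices G).
  have hr : matroid_rank (complete (vertices G)) (rk (complete (vertices G))) := @hrN rk hfam (vertices G).
  have mo : rk (complete (vertices G)) (star G v) <= rk (complete (vertices G)) G.
    by apply: (r_mono hr) => //; apply/fsubsetP=> e; rewrite mem_star => /andP [].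
  rewrite (rk_res hfam gN hGN (fsubset_refl G)).
  move: hdeg si mo t1; clear; nlia.
move=> k' k'0 k'lt [E1 [E2 [hU hI h1 h2 hs]]].
apply: (main_ind hfam hunb hLY hm k'0 hG (kc_mono hkc _) hU hI h1 h2 hs).
by rewrite leq_add2l -ltnS.
Qed.
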